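(* Every formula derivable in the axiomatic system HDML-AX described below is valid: for all HDML formulas $\varphi$, if $\vdash\varphi$ then $\varphi$ is true at every cell of every HDML model.
   Context: A cubical set consists of pairwise disjoint sets $Q_n$ ($n\in\mathbb N$), $Q=\bigcup_n Q_n$, and for $n\ge1$, $1\le i\le n$, maps $s_i,t_i:Q_n\to Q_{n-1}$ satisfying $\alpha_i\circ\beta_j=\beta_{j-1}\circ\alpha_i$ for $1\le i<j\le n$, $\alpha,\beta\in\{s,t\}$. An HDML model is $\mathcal H=(Q,\bar s,\bar t,l,V)$ with $l:Q_1\to\Sigma$ satisfying $l(s_i(q))=l(t_i(q))$ for $q\in Q_2$, $i\in\{1,2\}$, and $V:Q\to2^{AP}$. HDML formulas: $\varphi::=p\mid\bot\mid\varphi\to\varphi\mid\langle\mathsf s\rangle\varphi\mid\langle\mathsf t\rangle\varphi$ with standard Boolean abbreviations ($\neg,\top,\wedge,\vee,\leftrightarrow$), $[\mathsf s]\varphi:=\neg\langle\mathsf s\rangle\neg\varphi$, $[\mathsf t]\varphi:=\neg\langle\mathsf t\rangle\neg\varphi$, $\langle\mathsf t\rangle^0\varphi=\varphi$, $\langle\mathsf t\rangle^{i+1}\varphi=\langle\mathsf t\rangle\langle\mathsf t\rangle^{i}\varphi$. Satisfaction at $q\in Q_n$: $p$ iff $p\in V(q)$; $\bot$ never; $\to$ classical; $\langle\mathsf s\rangle\psi$ iff some $q'\in Q_{n+1}$ and $1\le i\le n+1$ have $s_i(q')=q$ and $q'\models\psi$; $\langle\mathsf t\rangle\psi$ iff some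 $1\le i\le n$ has $t_i(q)\models\psi$. For $i\ge1$, $\langle\mathsf t\rangle(i)$ denotes any formula $\bigwedge_{j=1}^{i}\langle\mathsf t\rangle\beta_j$ where $\beta_1,\dots,\beta_i$ are propositional formulas (over atomic propositions, $\bot$, $\to$) such that $\beta_j\wedge\beta_k$ is a propositional contradiction for $j\ne k$ (e.g. $\langle\mathsf t\rangle p\wedge\langle\mathsf t\rangle\neg p$ for $i=2$). The system HDML-AX has axioms: (A1) all instances of propositional tautologies; (A2) $\langle\mathsf s\rangle\bot\leftrightarrow\bot$ and $\langle\mathsf t\rangle\bot\leftrightarrow\bot$; (A3) $\langle\mathsf s\rangle(\varphi\vee\varphi')\leftrightarrow\langle\mathsf s\rangle\varphi\vee\langle\mathsf s\rangle\varphi'$ and the same for $\langle\mathsf t\rangle$; (A4) $[\mathsf s]\varphi\leftrightarrow\neg\langle\mathsf s\rangle\neg\varphi$ and $[\mathsf t]\varphi\leftrightarrow\neg\langle\mathsf t\rangle\neg\varphi$; (A5) $\langle\mathsf t\rangle(i)\to\langle\mathsf t\rangle^i\top$ for all $i\ge1$; (A6) $\langle\mathsf t\rangle^2\top\to(\langle\mathsf t\rangle[\mathsf t]\varphi\to[\mathsf t]\langle\mathsf t\rangle\varphi)$; (A7) $\langle\mathsf s\rangle[\mathsf t]\varphi\to[\mathsf t]\langle\mathsf s\rangle\varphi$ and $\langle\mathsf t\rangle[\mathsf s]\varphi\to[\mathsf s]\langle\mathsf t\rangle\varphi$; (A8) $\langle\mathsf s\rangle\langle\mathsf t\rangle^i\top\to[\mathsf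 s]\langle\mathsf t\rangle^i\top$ and $\langle\mathsf t\rangle\langle\mathsf t\rangle^i\top\to[\mathsf t]\langle\mathsf t\rangle^i\top$ for all $i\ge0$; (A9) $\langle\mathsf t\rangle^i\top\to[\mathsf s]\langle\mathsf t\rangle\langle\mathsf t\rangle^i\top$ and $\langle\mathsf s\rangle\langle\mathsf t\rangle\langle\mathsf t\rangle^i\top\to\langle\mathsf t\rangle^i\top$ for all $i\ge0$; (A10) $\langle\mathsf s\rangle\langle\mathsf s\rangle\langle\mathsf t\rangle\varphi\to\langle\mathsf s\rangle\langle\mathsf t\rangle\langle\mathsf s\rangle\varphi$ and $\langle\mathsf s\rangle\langle\mathsf t\rangle\langle\mathsf t\rangle\varphi\to\langle\mathsf t\rangle\langle\mathsf s\rangle\langle\mathsf t\rangle\varphi$. Rules: modus ponens; from $\varphi\to\varphi'$ infer $\langle\mathsf s\rangle\varphi\to\langle\mathsf s\rangle\varphi'$; from $\varphi\to\varphi'$ infer $\langle\mathsf t\rangle\varphi\to\langle\mathsf t\rangle\varphi'$; uniform substitution of formulas for atomic propositions. $\vdash\varphi$ means $\varphi$ is derivable. *)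

(* Defs.v *)
From Stdlib Require Import List Arith.
Import ListNotations.

Set Implicit Arguments.

Inductive form (AP : Type) : Type :=
| Var : AP -> form AP
| Bot : form AP
| Imp : form AP -> form AP -> form AP
| Ds  : form AP -> form AP
| Dt  : form AP -> form AP.
Arguments Bot {AP}.

Section Abbrev.
Variable AP : Type.
Definition Neg (a : form AP) : form AP := Imp a Bot.
Definition Top : form AP := Neg Bot.
Definition Or (a b : form AP) : form AP := Imp (Neg a) b.
Definition And (a b : form AP) : form AP := Neg (Imp a (Neg b)).
Definition Iff (a b : form AP) : form AP := And (Imp a b) (Imp b a).
Definition Bs (a : form AP) : form AP := Neg (Ds (Neg a)).
Definition Bt (a : form AP) : form AP := Neg (Dt (Neg a)).
Fixpoint Dt_pow (i : nat) (a : form AP) : form AP :=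
  match i with 0 => a | S k => Dt (Dt_pow k a) end.
Fixpoint BigAnd (l : list (form AP)) : form AP :=
  match l with
  | [] => Top
  | [x] => x
  | x :: xs => And x (BigAnd xs)
  end.

Fixpoint is_prop (a : form AP) : Prop :=
  match a with
  | Var _ => True | Bot => True
  | Imp a b => is_prop a /\ is_prop b
  | Ds _ => False | Dt _ => False
  end.
Fixpoint peval (v : AP -> bool) (a : form AP) : bool :=
  match a with
  | Var p => v p
  | Bot => false
  | Imp a b => implb (peval v a) (peval v b)
  | Ds _ => false | Dt _ => false
  end.
Definition prop_contradiction (a : form AP) : Prop :=
  is_prop a /\ forall v, peval v a = false.

Definition Dt_i_formula (betas : list (form AP)) : form AP :=
  BigAnd (map (@Dt AP) betas).
Definition exclusive_props (betas : list (form AP)) : Prop :=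
  (forall b, In b betas -> is_prop b) /\
  (forall j k, j < length betas -> k < length betas -> j <> k ->
     prop_contradiction (And (nth j betas Bot) (nth k betas Bot))).

Fixpoint subst (sg : AP -> form AP) (a : form AP) : form AP :=
  match a with
  | Var p => sg p
  | Bot => Bot
  | Imp a b => Imp (subst sg a) (subst sg b)
  | Ds a => Ds (subst sg a)
  | Dt a => Dt (subst sg a)
  end.
End Abbrev.
Arguments Top {AP}.

Inductive pform : Type :=
| PVar : nat -> pform
| PBot : pform
| PImp : pform -> pform -> pform.

Fixpoint pf_eval (v : nat -> bool) (t : pform) : bool :=
  match t with
  | PVar k => v k
  | PBot => false
  | PImp a b => implb (pf_eval v a) (pf_eval v b)
  end.
Definition tautology (t : pform) : Prop := forall v, pf_eval v t = true.
Fixpoint pf_inst (AP : Type) (sg : nat -> form AP) (t : pform) : form AP :=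
  match t with
  | PVar k => sg k
  | PBot => Bot
  | PImp a b => Imp (pf_inst sg a) (pf_inst sg b)
  end.

(* Cubical set: graded family Q n (pairwise disjoint by construction),
   face maps s_i, t_i : Q (n+1) -> Q n  (meaningful for 1 <= i <= n+1). *)
Record cubical_set : Type := {
  cell : nat -> Type;
  src : forall n : nat, nat -> cell (S n) -> cell n;
  tgt : forall n : nat, nat -> cell (S n) -> cell n
}.

Definition face (C : cubical_set) (b : bool) : forall n, nat -> cell C (S n) -> cell C n :=
  if b then src C else tgt C.

Definition cubical_identities (C : cubical_set) : Prop :=
  forall (m i j : nat) (a b : bool) (q : cell C (S (S m))),
    1 <= i -> i < j -> j <= S (S m) ->
    face C a m i (face C b (S m) j q) = face C b m (j - 1) (face C a (S m) i q).

Record hdml_model (AP Sig : Type) : Type := {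
  cs : cubical_set;
  cs_ok : cubical_identities cs;
  lab : cell cs 1 -> Sig;
  lab_ok : forall (q : cell cs 2) (i : nat), (i = 1 \/ i = 2) ->
             lab (src cs 1 i q) = lab (tgt cs 1 i q);
  val : forall n : nat, cell cs n -> AP -> Prop
}.

Fixpoint sat (AP Sig : Type) (M : hdml_model AP Sig) (f : form AP)
  : forall n : nat, cell (cs M) n -> Prop :=
  match f with
  | Var p => fun n q => val M n q p
  | Bot => fun _ _ => False
  | Imp a b => fun n q => sat M a n q -> sat M b n q
  | Ds a => fun n q =>
      exists (q' : cell (cs M) (S n)) (i : nat),
        1 <= i <= S n /\ src (cs M) n i q' = q /\ sat M a (S n) q'
  | Dt a => fun n =>
      match n as n0 return cell (cs M) n0 -> Prop with
      | 0 => fun _ => False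
      | S m => fun q => exists i : nat, 1 <= i <= S m /\ sat M a m (tgt (cs M) m i q)
      end
  end.

Definition valid (AP : Type) (f : form AP) : Prop :=
  forall (Sig : Type) (M : hdml_model AP Sig) (n : nat) (q : cell (cs M) n), sat M f n q.

Inductive derivable (AP : Type) : form AP -> Prop :=
| ax1 : forall (t : pform) (sg : nat -> form AP), tautology t -> derivable (pf_inst sg t)
| ax2s : derivable (Iff (Ds Bot) Bot)
| ax2t : derivable (Iff (Dt Bot) Bot)
| ax3s : forall a b, derivable (Iff (Ds (Or a b)) (Or (Ds a) (Ds b)))
| ax3t : forall a b, derivable (Iff (Dt (Or a b)) (Or (Dt a) (Dt b)))
| ax4s : forall a, derivable (Iff (Bs a) (Neg (Ds (Neg a))))
| ax4t : forall a, derivable (Iff (Bt a) (Neg (Dt (Neg a))))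
| ax5 : forall betas, 1 <= length betas -> exclusive_props betas ->
          derivable (Imp (Dt_i_formula betas) (Dt_pow (length betas) Top))
| ax6 : forall a, derivable (Imp (Dt_pow 2 Top) (Imp (Dt (Bt a)) (Bt (Dt a))))
| ax7a : forall a, derivable (Imp (Ds (Bt a)) (Bt (Ds a)))
| ax7b : forall a, derivable (Imp (Dt (Bs a)) (Bs (Dt a)))
| ax8a : forall i, derivable (Imp (Ds (Dt_pow i Top)) (Bs (Dt_pow i Top)))
| ax8b : forall i, derivable (Imp (Dt (Dt_pow i Top)) (Bt (Dt_pow i Top)))
| ax9a : forall i, derivable (Imp (Dt_pow i Top) (Bs (Dt (Dt_pow i Top))))
| ax9b : forall i, derivable (Imp (Ds (Dt (Dt_pow i Top))) (Dt_pow i Top))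
| ax10a : forall a, derivable (Imp (Ds (Ds (Dt a))) (Ds (Dt (Ds a))))
| ax10b : forall a, derivable (Imp (Ds (Dt (Dt a))) (Dt (Ds (Dt a))))
| r_mp : forall a b, derivable (Imp a b) -> derivable a -> derivable b
| r_mons : forall a b, derivable (Imp a b) -> derivable (Imp (Ds a) (Ds b))
| r_mont : forall a b, derivable (Imp a b) -> derivable (Imp (Dt a) (Dt b))
| r_subst : forall (sg : AP -> form AP) a, derivable a -> derivable (subst sg a).

(* Main.v *)
Require Import Defs.
From Stdlib Require Import List Arith Lia Classical ClassicalEpsilon.
Import ListNotations.

Section Sound.
Variables (AP Sig : Type) (M : hdml_model AP Sig).
Let C := cs M.

Lemma idgen (a b : bool) m i j (q : cell C (S (S m))) :
  1 <= i -> i < j -> j <= S (S m) ->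
  face C a m i (face C b (S m) j q) = face C b m (j - 1) (face C a (S m) i q).
Proof. intros; apply (cs_ok M); auto. Qed.

Lemma SS m i j (q : cell C (S (S m))) : 1 <= i -> i < j -> j <= S (S m) ->
  src C m i (src C (S m) j q) = src C m (j - 1) (src C (S m) i q).
Proof. exact (idgen true true m i j q). Qed.
Lemma ST m i j (q : cell C (S (S m))) : 1 <= i -> i < j -> j <= S (S m) ->
  src C m i (tgt C (S m) j q) = tgt C m (j - 1) (src C (S m) i q).
Proof. exact (idgen true false m i j q). Qed.
Lemma TS m i j (q : cell C (S (S m))) : 1 <= i -> i < j -> j <= S (S m) ->
  tgt C m i (src C (S m) j q) = src C m (j - 1) (tgt C (S m) i q).
Proof. exact (idgen false true m i j q). Qed.
Lemma TT m i j (q : cell C (S (S m))) : 1 <= i -> i < j -> j <= S (S m) ->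
  tgt C m i (tgt C (S m) j q) = tgt C m (j - 1) (tgt C (S m) i q).
Proof. exact (idgen false false m i j q). Qed.

Lemma dtpow i : forall n (q : cell C n), sat M (Dt_pow i Top) n q <-> i <= n.
Proof.
  induction i; intros n q; simpl.
  - split; [lia| tauto].
  - destruct n; simpl. split; [tauto|lia].
    split.
    + intros [j [_ H]]. apply IHi in H. lia.
    + intros H. exists 1. split. lia. apply IHi. lia.
Qed.

Definition bv (P : Prop) : bool := if excluded_middle_informative P then true else false.
Lemma bv_true P : bv P = true <-> P.
Proof. unfold bv; destruct (excluded_middle_informative P); split; auto; discriminate. Qed.

Lemma taut_sem (sg : nat -> form AP) t n (q : cell C n) :
  sat M (pf_inst sg t) n q <-> pf_eval (fun k => bv (sat M (sg k) n q)) t = true.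
Proof.
  induction t; simpl.
  - rewrite bv_true; tauto.
  - split; [tauto|discriminate].
  - rewrite IHt1, IHt2. destruct (pf_eval _ t1), (pf_eval _ t2); simpl; intuition.
Qed.

Lemma prop_sem (b : form AP) n (q : cell C n) : is_prop b ->
  (sat M b n q <-> peval (fun p => bv (val M n q p)) b = true).
Proof.
  induction b; simpl; intros Hp; try tauto.
  - rewrite bv_true; tauto.
  - split; [tauto|discriminate].
  - destruct Hp as [H1 H2]. rewrite (IHb1 H1), (IHb2 H2).
    destruct (peval _ b1), (peval _ b2); simpl; intuition.
Qed.

Lemma bigand_sem l n (q : cell C n) : l <> [] ->
  sat M (BigAnd l) n q -> forall x, In x l -> sat M x n q.
Proof.
  induction l as [|a l IH]; intros Hne H x Hx; [congruence|].
  destruct l as [|b l].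
  - destruct Hx as [<-|[]]; exact H.
  - change (sat M (And a (BigAnd (b :: l))) n q) in H. simpl in H.
    destruct Hx as [<-|Hx].
    + apply NNPP; intro N; apply H; intros Ha; exfalso; auto.
    + apply IH; auto. congruence.
      apply NNPP; intro N; apply H; intros Ha HB; auto.
Qed.

Lemma choose_list (P : nat -> nat -> Prop) n :
  (forall j, j < n -> exists i, P j i) ->
  exists li, length li = n /\ forall j, j < n -> P j (nth j li 0).
Proof.
  induction n; intros H.
  - exists []; split; auto; intros; lia.
  - assert (IH' : forall j, j < n -> exists i, P j i) by (intros; apply H; lia).
    destruct (IHn IH') as [li [Hl Hp]].
    destruct (H n ltac:(lia)) as [i Hi].
    exists (li ++ [i]). split. rewrite length_app; simpl; lia.
    intros j Hj. destruct (Nat.eq_dec j n).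
    + subst j. rewrite app_nth2 by lia. rewrite Hl, Nat.sub_diag. exact Hi.
    + rewrite app_nth1 by lia. apply Hp; lia.
Qed.

Lemma ax5_sound betas n (q : cell C n) :
  1 <= length betas -> exclusive_props betas ->
  sat M (Dt_i_formula betas) n q -> length betas <= n.
Proof.
  intros Hlen [Hprop Hexc] H.
  unfold Dt_i_formula in H.
  assert (Hall : forall j, j < length betas -> sat M (Dt (nth j betas Bot)) n q).
  { intros j Hj. eapply bigand_sem. 2: exact H. destruct betas; simpl in *; [lia|discriminate].
    apply in_map. apply nth_In; auto. }
  destruct n as [|m].
  { specialize (Hall 0 ltac:(lia)). simpl in Hall. contradiction. }
  destruct (choose_list (fun j i => 1 <= i <= S m /\
      sat M (nth j betas Bot) m (tgt C m i q)) (length betas)) as [li [Hl Hp]].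
  { intros j Hj. specialize (Hall j Hj). simpl in Hall. exact Hall. }
  assert (ND : NoDup li).
  { apply (NoDup_nth li 0). intros j k Hj Hk E. rewrite Hl in Hj, Hk.
    destruct (Nat.eq_dec j k) as [|Hne]; auto. exfalso.
    destruct (Hexc j k Hj Hk Hne) as [Hip Hf].
    destruct (Hp j Hj) as [_ Sj]. destruct (Hp k Hk) as [_ Sk].
    rewrite E in Sj.
    assert (sat M (And (nth j betas Bot) (nth k betas Bot)) m (tgt C m (nth k li 0) q)).
    { simpl. intro X. exact (X Sj Sk). }
    rewrite prop_sem in H0 by exact Hip. rewrite Hf in H0. discriminate. }
  assert (Inc : incl li (seq 1 (S m))).
  { intros x Hx. apply In_nth with (d := 0) in Hx. destruct Hx as [j [Hj <-]].
    rewrite Hl in Hj. destruct (Hp j Hj) as [R _]. apply in_seq. lia. }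
  pose proof (NoDup_incl_length ND Inc). rewrite length_seq in H0. lia.
Qed.

Definition subM (sg : AP -> form AP) : hdml_model AP Sig :=
  {| cs := cs M; cs_ok := cs_ok M; lab := lab M; lab_ok := lab_ok M;
     val := fun n q p => sat M (sg p) n q |}.

Lemma subst_sem sg a : forall n (q : cell C n),
  sat (subM sg) a n q <-> sat M (subst sg a) n q.
Proof.
  induction a; intros n q; simpl; try tauto.
  - rewrite IHa1, IHa2; tauto.
  - split; intros [q' [i [Hi [E Hs]]]]; exists q', i; split; auto; split; auto;
      apply IHa; auto.
  - destruct n; simpl; [tauto|].
    split; intros [i [Hi Hs]]; exists i; split; auto; apply IHa; auto.
Qed.


Lemma sat_Iff a b n (q : cell C n) : sat M (Iff a b) n q <-> (sat M a n q <-> sat M b n q).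
Proof. simpl. split; intros H. split; intros; apply NNPP; intro; apply H; auto.
  intro X; apply X; intros; apply H; auto. Qed.
Lemma sat_Or a b n (q : cell C n) : sat M (Or a b) n q <-> (sat M a n q \/ sat M b n q).
Proof. simpl. split; intros H. destruct (classic (sat M a n q)); auto.
  destruct H; tauto. Qed.
Lemma sat_Bs a n (q : cell C n) : sat M (Bs a) n q <->
  (forall q' i, 1 <= i <= S n -> src C n i q' = q -> sat M a (S n) q').
Proof. simpl. split; intros H.
  - intros q' i Hi E. apply NNPP; intro N. apply H. exists q', i; auto.
  - intros [q' [i [Hi [E N]]]]. apply N; eapply H; eauto. Qed.
Lemma sat_Bt a m (q : cell C (S m)) : sat M (Bt a) (S m) q <->
  (forall i, 1 <= i <= S m -> sat M a m (tgt C m i q)).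
Proof. simpl. split; intros H.
  - intros i Hi. apply NNPP; intro N. apply H. exists i; auto.
  - intros [i [Hi N]]. apply N; apply H; auto. Qed.
Lemma sat_Bt0 a (q : cell C 0) : sat M (Bt a) 0 q.
Proof. simpl. tauto. Qed.

Lemma ax6_s a n (q : cell C n) : sat M (Imp (Dt_pow 2 Top) (Imp (Dt (Bt a)) (Bt (Dt a)))) n q.
Proof.
  change (sat M (Dt_pow 2 Top) n q -> sat M (Dt (Bt a)) n q -> sat M (Bt (Dt a)) n q).
  intros H2 H. apply dtpow in H2. destruct n as [|[|m]]; try lia.
  destruct H as [i [Hi H]]. rewrite sat_Bt in H.
  apply sat_Bt. intros i' Hi'. simpl.
  destruct (lt_eq_lt_dec i' i) as [[Hlt|Heq]|Hgt].
  - exists (i - 1). split. lia. rewrite <- TT by lia. apply H. lia.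
  - subst. exists 1. split. lia. apply H. lia.
  - exists i. split. lia. rewrite TT by lia. apply H. lia.
Qed.

Lemma ax7a_s a n (q : cell C n) : sat M (Imp (Ds (Bt a)) (Bt (Ds a))) n q.
Proof.
  change (sat M (Ds (Bt a)) n q -> sat M (Bt (Ds a)) n q).
  intros [q' [i [Hi [E H]]]]. rewrite sat_Bt in H.
  destruct n as [|m]. apply sat_Bt0.
  apply sat_Bt. intros j Hj. simpl. subst q.
  destruct (lt_dec j i).
  - exists (tgt C (S m) j q'), (i - 1). split. lia. split.
    + symmetry. apply TS; lia.
    + apply H. lia.
  - exists (tgt C (S m) (S j) q'), i. split. lia. split.
    + rewrite ST by lia. f_equal. lia.
    + apply H. lia.
Qed.

Lemma ax7b_s a n (q : cell C n) : sat M (Imp (Dt (Bs a)) (Bs (Dt a))) n q.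
Proof.
  change (sat M (Dt (Bs a)) n q -> sat M (Bs (Dt a)) n q).
  destruct n as [|m]. simpl. tauto.
  intros [i [Hi H]]. rewrite sat_Bs in H.
  apply sat_Bs. intros q'' j Hj E. subst q. simpl.
  destruct (lt_dec i j).
  - exists i. split. lia. apply (H _ (j - 1)). lia. symmetry; apply TS; lia.
  - exists (S i). split. lia. apply (H _ j). lia.
    rewrite ST by lia. f_equal. lia.
Qed.

Lemma ax10a_s a n (q : cell C n) : sat M (Imp (Ds (Ds (Dt a))) (Ds (Dt (Ds a)))) n q.
Proof.
  change (sat M (Ds (Ds (Dt a))) n q -> sat M (Ds (Dt (Ds a))) n q).
  intros [q1 [i1 [Hi1 [E1 [q2 [i2 [Hi2 [E2 [j [Hj Ha]]]]]]]]]]. subst q q1.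
  destruct (Nat.eq_dec j i2) as [Ej|Nj].
  - subst j. destruct (lt_dec i1 i2).
    + exists (src C (S n) i1 q2), (i2 - 1). split. lia. split.
      * symmetry; apply SS; lia.
      * simpl. exists (i2 - 1). split. lia.
        exists (tgt C (S n) i2 q2), i1. split. lia. split; auto. apply ST; lia.
    + exists (src C (S n) (S i1) q2), i2. split. lia. split.
      * rewrite SS by lia. f_equal. lia.
      * simpl. exists i2. split. lia.
        exists (tgt C (S n) i2 q2), i1. split. lia. split; auto.
        rewrite TS by lia. f_equal. lia.
  - exists (src C (S n) i2 q2), i1. split. lia. split. auto. simpl.
    destruct (lt_dec j i2).
    + exists j. split. lia. exists (tgt C (S n) j q2), (i2 - 1). split. lia. split; auto.
      symmetry. apply TS; lia.
    + exists (j - 1). split. lia. exists (tgt C (S n) j q2), i2. split. lia. split; auto.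
      apply ST; lia.
Qed.

Lemma ax10b_s a n (q : cell C n) : sat M (Imp (Ds (Dt (Dt a))) (Dt (Ds (Dt a)))) n q.
Proof.
  change (sat M (Ds (Dt (Dt a))) n q -> sat M (Dt (Ds (Dt a))) n q).
  intros [q1 [i1 [Hi1 [E1 H]]]]. subst q.
  destruct n as [|m]. { simpl in H. destruct H as [j1 [_ []]]. }
  destruct H as [j1 [Hj1 [j2 [Hj2 Ha]]]].
  simpl.
  destruct (Nat.eq_dec j1 i1) as [Ej|Nj].
  - subst j1. destruct (lt_dec j2 i1).
    + exists j2. split. lia. exists (tgt C (S m) j2 q1), (i1 - 1). split. lia. split.
      * symmetry. apply TS; lia.
      * exists (i1 - 1). split. lia. rewrite <- TT by lia. exact Ha.
    + exists j2. split. lia. exists (tgt C (S m) (S j2) q1), i1. split. lia. split.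
      * rewrite ST by lia. f_equal. lia.
      * exists i1. split. lia. rewrite TT by lia. replace (S j2 - 1) with j2 by lia. exact Ha.
  - destruct (lt_dec j1 i1).
    + exists j1. split. lia. exists (tgt C (S m) j1 q1), (i1 - 1). split. lia. split.
      * symmetry. apply TS; lia.
      * exists j2. split. lia. exact Ha.
    + exists (j1 - 1). split. lia. exists (tgt C (S m) j1 q1), i1. split. lia. split.
      * apply ST; lia.
      * exists j2. split. lia. exact Ha.
Qed.
End Sound.

Ltac cl := repeat match goal with
  | |- ~ _ => intro
  | |- _ -> _ => intro
  end.

Theorem mainTheorem8 : forall (AP : Type) (phi : form AP),
  derivable phi -> valid phi.
Proof.
  intros AP phi D. induction D; intros Sig M n q.
  - apply taut_sem. apply H.
  - apply sat_Iff. simpl. split; [intros [q' [i [_ [_ []]]]] | tauto].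
  - apply sat_Iff. destruct n; simpl; [tauto|]. split; [intros [i [_ []]] | tauto].
  - apply sat_Iff. rewrite sat_Or. simpl. split.
    + intros [q' [i [Hi [E Hs]]]]. apply sat_Or in Hs. firstorder.
    + intros [[q' [i [Hi [E Hs]]]]|[q' [i [Hi [E Hs]]]]]; exists q', i; (split; [auto|split;[auto|]]);
      apply sat_Or; auto.
  - apply sat_Iff. rewrite sat_Or. destruct n; simpl; [tauto|]. split.
    + intros [i [Hi Hs]]. apply sat_Or in Hs. firstorder.
    + intros [[i [Hi Hs]]|[i [Hi Hs]]]; exists i; (split; [auto|]); apply sat_Or; auto.
  - apply sat_Iff. simpl. tauto.
  - apply sat_Iff. simpl. tauto.
  - simpl. intro H1. apply dtpow. eapply ax5_sound; eauto.
  - apply ax6_s.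
  - apply ax7a_s.
  - apply ax7b_s.
  - simpl. intros [q' [i0 [Hi [E Hs]]]]. apply sat_Bs. intros. apply dtpow. apply dtpow in Hs. auto.
  - destruct n; [intros _; apply sat_Bt0|]. simpl. intros [j [Hj Hs]]. apply sat_Bt. intros.
    apply dtpow. apply dtpow in Hs. auto.
  - intros Hs. apply dtpow in Hs. apply sat_Bs. intros. simpl. exists 1. split. lia. apply dtpow. lia.
  - simpl. intros [q' [i0 [Hi [E [j [Hj Hs]]]]]]. apply dtpow in Hs. apply dtpow. lia.
  - apply ax10a_s.
  - apply ax10b_s.
  - exact (IHD1 Sig M n q (IHD2 Sig M n q)).
  - simpl. intros [q' [i [Hi [E Hs]]]]. exists q', i. split; auto. split; auto. apply (IHD Sig M (S n) q' Hs).
  - destruct n; simpl; [tauto|]. intros [i [Hi Hs]]. exists i. split; auto. apply (IHD Sig M n _ Hs).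
  - apply subst_sem. apply IHD.
Qed.
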